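(* Every exact nontrivial linked chain of finite support is equivalent to $\mathfrak{u}(\mathbf{r})$ for a unique tuple $\mathbf{r}$.
   Context: Let $k$ be a field; all vector spaces are finite-dimensional over $k$. Let $\mathcal{Z}$ be the quiver with vertex set $\mathbb Z$ and, for each $i\in\mathbb Z$, an arrow $\alpha^i\colon i\to i+1$ and an arrow $\alpha_i\colon i+1\to i$. A representation of $\mathcal Z$ is written $\mathfrak{u}=(U_i,u_i,u^i)_{i\in\mathbb Z}$ with $u^i\colon U_i\to U_{i+1}$ and $u_i\colon U_{i+1}\to U_i$. For $i,j\in\mathbb Z$ put $u^i_i=\mathrm{Id}_{U_i}$, $u^i_j=u^{j-1}\circ\cdots\circ u^i$ if $j>i$, and $u^i_j=u_j\circ u_{j+1}\circ\cdots\circ u_{i-1}$ if $j<i$. The representation $\mathfrak{u}$ is a linked chain if for each $i\in\mathbb Z$: $u_i\circ u^i=0$, $u^i\circ u_i=0$, and $\ker(u_{i-1})\cap\ker(u^i)=0$. It is exact if $\ker(u^i)=\mathrm{Im}(u_i)$ and $\ker(u_i)=\mathrm{Im}(u^i)$ for each $i$; nontrivial if $U_i\neq 0$ for every $i$; and it has finite support if there is a finite $H\subseteq\mathbb Z$ such that for each $i\in\mathbb Z$ there is $j\in H$ with $u^j_i$ surjective. ''Equivalent'' means isomorphic as representations up to translation, i.e. identifying $\mathfrak{u}$ with $\mathfrak{u}[t]=(U_{t+i},u_{t+i},u^{t+i})_{i\in\mathbb Z}$ for every $t\in\mathbb Z$. For $d\geq 0$ and a tuple $\mathbf{r}=(r_0,\dots,r_d)$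 of nonnegative integers with $r_0,r_d\neq 0$, let $R_i=r_0+\cdots+r_i$, $S_i=r_{i+1}+\cdots+r_d$, and $r=R_d$. Define $\mathfrak{u}(\mathbf{r})=(U_i,u_i,u^i)_{i\in\mathbb Z}$ by $U_i=k^r$ (canonical basis) for all $i$, where $u^i\colon U_i\to U_{i+1}$ is the zero matrix if $i<0$, the identity if $i\geq d$, and $\mathrm{diag}(I_{R_i},0_{S_i})$ for $0\leq i<d$; and $u_i\colon U_{i+1}\to U_i$ is the zero matrix if $i\geq d$, the identity if $i<0$, and $\mathrm{diag}(0_{R_i},I_{S_i})$ for $0\leq i<d$ (here $0_a$, $I_a$ are the $a\times a$ zero and identity matrices). Then $\mathfrak{u}(\mathbf{r})$ is an exact nontrivial linked chain of pure dimension $r$ with minimal support $\{0,\dots,d\}$. *)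

(* Defs.v *)
From HB Require Import structures.
From mathcomp Require Import all_boot all_order all_algebra.
Set Implicit Arguments. Unset Strict Implicit. Unset Printing Implicit Defensive.
Import Order.TTheory GRing.Theory Num.Theory.
Local Open Scope ring_scope.

(* A finite-dimensional
   vector space U_i is represented by k^(dim i) (row vectors), a linear map
   U -> V by a matrix acting on the right: v |-> v *m A. *)
Record zrep (k : fieldType) := ZRep {
  dim : int -> nat;
  up : forall i : int, 'M[k]_(dim i, dim (i + 1));      (* u^i : U_i -> U_{i+1} *)
  dn : forall i : int, 'M[k]_(dim (i + 1), dim i)       (* u_i : U_{i+1} -> U_i *)
}.

Lemma addz_S (j : int) (n : nat) : j + n%:Z + 1 = j + (n.+1)%:Z.
Proof. by rewrite -addrA -PoszD addn1. Qed.

Section ZRepDefs.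
Variable k : fieldType.
Implicit Types u v : zrep k.

Fixpoint uppath u (j : int) (n : nat) : 'M[k]_(dim u j, dim u (j + n%:Z)) :=
  match n return 'M[k]_(dim u j, dim u (j + n%:Z)) with
  | 0 => castmx (erefl, congr1 (dim u) (esym (addr0 j))) 1%:M
  | n'.+1 => castmx (erefl, congr1 (dim u) (addz_S j n'))
                    (uppath u j n' *m up u (j + n'%:Z))
  end.

Fixpoint dnpath u (j : int) (n : nat) : 'M[k]_(dim u (j + n%:Z), dim u j) :=
  match n return 'M[k]_(dim u (j + n%:Z), dim u j) with
  | 0 => castmx (congr1 (dim u) (esym (addr0 j)), erefl) 1%:M
  | n'.+1 => castmx (congr1 (dim u) (addz_S j n'), erefl)
                    (dn u (j + n'%:Z) *m dnpath u j n')
  end.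

Definition comp_surj u (j i : int) : Prop :=
  exists n : nat,
    (i = j + n%:Z /\ row_full (uppath u j n)) \/
    (j = i + n%:Z /\ row_full (dnpath u i n)).

Definition linked_chain u : Prop :=
  [/\ forall i, up u i *m dn u i = 0,
      forall i, dn u i *m up u i = 0 &
      (* ker(u_{i-1}) /\ ker(u^i) = 0 in U_i, written at index i+1 *)
      forall i, \rank (kermx (dn u i) :&: kermx (up u (i + 1)))%MS = 0%N].

Definition exact_rep u : Prop :=
  forall i, (kermx (up u i) == dn u i)%MS /\ (kermx (dn u i) == up u i)%MS.

Definition nontrivial u : Prop := forall i, dim u i != 0%N.

Definition finite_support u : Prop :=
  exists H : seq int, forall i, exists2 j, j \in H & comp_surj u j i.

Definition shift u (t : int) : zrep k :=
  @ZRep k (fun i => dim u (t + i))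
    (fun i => castmx (erefl, congr1 (dim u) (esym (addrA t i 1))) (up u (t + i)))
    (fun i => castmx (congr1 (dim u) (esym (addrA t i 1)), erefl) (dn u (t + i))).

Definition rep_iso u v : Prop :=
  exists phi : forall i, 'M[k]_(dim u i, dim v i),
    [/\ forall i, row_free (phi i) && row_full (phi i),
        forall i, phi i *m up v i = up u i *m phi (i + 1) &
        forall i, phi (i + 1) *m dn v i = dn u i *m phi i].

Definition equivalent u v : Prop := exists t : int, rep_iso u (shift v t).

Definition valid_tuple (r : seq nat) : bool :=
  [&& (0 < size r)%N, head 0%N r != 0%N & last 0%N r != 0%N].

Definition tdeg (r : seq nat) : nat := (size r).-1.
Definition Rsum (r : seq nat) (n : nat) : nat := \sum_(0 <= l < n.+1) nth 0%N r l.
Definition rtot (r : seq nat) : nat := Rsum r (tdeg r).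

(* diagonal pattern of u^i : zero for i<0, identity for i>=d, diag(I_{R_i},0_{S_i}) *)
Definition up_diag (r : seq nat) (i : int) (a : nat) : bool :=
  match i with
  | Posz n => if (tdeg r <= n)%N then true else (a < Rsum r n)%N
  | Negz _ => false
  end.
(* diagonal pattern of u_i : identity for i<0, zero for i>=d, diag(0_{R_i},I_{S_i}) *)
Definition dn_diag (r : seq nat) (i : int) (a : nat) : bool :=
  match i with
  | Posz n => if (tdeg r <= n)%N then false else (Rsum r n <= a)%N
  | Negz _ => true
  end.

Definition urep (r : seq nat) : zrep k :=
  @ZRep k (fun _ => rtot r)
    (fun i => \matrix_(a, b) ((a == b) && up_diag r i a)%:R)
    (fun i => \matrix_(a, b) ((a == b) && dn_diag r i a)%:R).

End ZRepDefs.

(* Main.v *)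
Require Import Defs.
From mathcomp Require Import all_boot all_order all_algebra.
From mathcomp Require Import zify.
Set Implicit Arguments. Unset Strict Implicit. Unset Printing Implicit Defensive.
Import Order.TTheory GRing.Theory Num.Theory.
Local Open Scope ring_scope.

Lemma int_ind_up (K : int) (P : int -> Prop) :
  (forall i, i <= K -> P i) -> (forall i, P i -> P (i + 1)) -> forall i, P i.
Proof.
move=> Hb Hs i; case: (lerP i K) => [/Hb //|hKi].
have -> : i = K + `|i - K|%N%:Z by rewrite gez0_abs ?subr_ge0 ?ltW //; lia.
elim: `|i - K|%N => [|m IH]; first by rewrite addr0; apply: Hb.
by rewrite -addz_S; apply: Hs.
Qed.

Lemma int_ind_dn (K : int) (P : int -> Prop) :
  (forall i, K <= i -> P i) -> (forall i, P (i + 1) -> P i) -> forall i, P i.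
Proof.
move=> Hb Hs i; case: (lerP K i) => [/Hb //|hKi].
have -> : i = K - `|K - i|%N%:Z by rewrite gez0_abs ?subr_ge0 ?ltW //; lia.
elim: `|K - i|%N => [|m IH]; first by rewrite subr0; apply: Hb.
apply: Hs; suff -> : K - m.+1%:Z + 1 = K - m%:Z by [].
lia.
Qed.

Section Generic.
Variable k : fieldType.

Lemma rank_castmx m n m' n' (e : (m = m') * (n = n')) (A : 'M[k]_(m, n)) :
  \rank (castmx e A) = \rank A.
Proof. case: e => e1 e2; subst; by rewrite castmx_id. Qed.

Lemma castmx_mul0 m1 m2 m3 m1' m2' m3' (e1 : m1 = m1') (e2 e2' : m2 = m2') (e3 : m3 = m3')
  (A : 'M[k]_(m1, m2)) (B : 'M[k]_(m2, m3)) :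
  A *m B = 0 -> castmx (e1, e2) A *m castmx (e2', e3) B = 0.
Proof. subst; by rewrite !castmx_id. Qed.

Lemma rank_castmx_adds m1 m2 n m1' m2' n' (e1 : m1 = m1') (e2 : m2 = m2') (e e' : n = n')
  (A : 'M[k]_(m1, n)) (B : 'M[k]_(m2, n)) :
  \rank (castmx (e1, e) A + castmx (e2, e') B)%MS = \rank (A + B)%MS.
Proof. subst; by rewrite !castmx_id. Qed.

Lemma iso_inv m n (A : 'M[k]_(m, n)) : row_free A && row_full A ->
  [/\ A *m pinvmx A = 1%:M, pinvmx A *m A = 1%:M & row_free (pinvmx A) && row_full (pinvmx A)].
Proof.
case/andP=> fr fu.
have h2 : pinvmx A *m A = 1%:M by apply: mulVpmx.
have h1 : A *m pinvmx A = 1%:M.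
  apply: (row_free_inj fr); by rewrite -mulmxA h2 mulmx1 mul1mx.
split => //; apply/andP; split.
- by apply/row_freeP; exists A.
- by apply/row_fullP; exists A.
Qed.

Lemma iso_mul m n p (A : 'M[k]_(m, n)) (B : 'M[k]_(n, p)) :
  row_free A && row_full A -> row_free B && row_full B -> row_free (A *m B) && row_full (A *m B).
Proof.
case/andP=> fa ua /andP[fb ub]; apply/andP; split.
- by rewrite /row_free mxrankMfree.
- by rewrite /row_full (eqmxMfull _ ua).
Qed.

Lemma rep_iso_sym (u v : zrep k) : rep_iso u v -> rep_iso v u.
Proof.
case=> phi [iso hu hd]; exists (fun i => pinvmx (phi i)); split.
- by move=> i; case: (iso_inv (iso i)).
- move=> i; case: (iso_inv (iso i)) => a1 a2 _; case: (iso_inv (iso (i + 1))) => b1 b2 _.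
  apply: (row_full_inj (proj2 (andP (iso i)))).
  by rewrite mulmxA a1 mul1mx mulmxA hu -mulmxA b1 mulmx1.
- move=> i; case: (iso_inv (iso i)) => a1 a2 _; case: (iso_inv (iso (i + 1))) => b1 b2 _.
  apply: (row_full_inj (proj2 (andP (iso (i+1))))).
  by rewrite mulmxA b1 mul1mx mulmxA hd -mulmxA a1 mulmx1.
Qed.

Lemma rep_iso_trans (u v w : zrep k) : rep_iso u v -> rep_iso v w -> rep_iso u w.
Proof.
case=> phi [iso hu hd] [chi [iso' hu' hd']]; exists (fun i => phi i *m chi i); split.
- by move=> i; apply: iso_mul.
- by move=> i; rewrite -mulmxA hu' mulmxA hu -mulmxA.
- by move=> i; rewrite -mulmxA hd' !mulmxA hd.
Qed.

Lemma rep_iso_rank (u v : zrep k) : rep_iso u v -> forall i, \rank (up u i) = \rank (up v i).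
Proof.
case=> phi [iso hu _] i.
have := congr1 mxrank (hu i).
rewrite (eqmxMfull _ (proj2 (andP (iso i)))) mxrankMfree //.
exact: (proj1 (andP (iso (i+1)))).
Qed.

End Generic.

Section Model.
Variable k : fieldType.
Local Open Scope nat_scope.

Lemma Rsum_tail (r : seq nat) m : size r <= m.+1 -> Rsum r m = \sum_(0 <= l < size r) nth 0 r l.
Proof.
move=> h; rewrite /Rsum (@big_cat_nat _ _ _ (size r)) //=.
have -> : \sum_(size r <= l < m.+1) nth 0 r l = 0.
  by rewrite big_nat_cond big1 // => l /andP[/andP[hl _] _]; rewrite nth_default.
by rewrite addn0.
Qed.

Lemma Rsum_big (r : seq nat) m : tdeg r <= m -> Rsum r m = rtot r.
Proof.
move=> h; rewrite /rtot !Rsum_tail //; first by rewrite /tdeg; case: (size r).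
by move: h; rewrite /tdeg; case: (size r).
Qed.

Lemma Rsum_mono (r : seq nat) m m' : m <= m' -> Rsum r m <= Rsum r m'.
Proof.
move=> h; rewrite /Rsum [X in _ <= X](@big_cat_nat _ _ _ m.+1) //=.
exact: leq_addr.
Qed.

Lemma Rsum_le_tot (r : seq nat) m : Rsum r m <= rtot r.
Proof.
case: (leqP (tdeg r) m) => h; first by rewrite Rsum_big.
by apply: Rsum_mono; apply: ltnW.
Qed.

Lemma RsumS (r : seq nat) m : Rsum r m.+1 = Rsum r m + nth 0 r m.+1.
Proof. by rewrite /Rsum big_nat_recr. Qed.

Definition gR (r : seq nat) (x : int) : nat :=
  match x with Posz m => Rsum r m | Negz _ => 0 end.

Lemma up_diag_gR (r : seq nat) i a : a < rtot r -> up_diag r i a = (a < gR r i).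
Proof.
move=> ha; case: i => [m|m] //=.
case: (leqP (tdeg r) m) => h; last by [].
by rewrite Rsum_big.
Qed.

Lemma up_urep_pid (r : seq nat) i : up (urep k r) i = pid_mx (gR r i).
Proof.
apply/matrixP => a b; rewrite !mxE /=; congr (_ %:R).
by rewrite up_diag_gR ?ltn_ord.
Qed.

Lemma rank_up_urep (r : seq nat) i : \rank (up (urep k r) i) = gR r i.
Proof.
rewrite up_urep_pid rank_pid_mx //; case: i => [m|m] //=; exact: Rsum_le_tot.
Qed.

Lemma rank_up_shift (v : zrep k) s i : \rank (up (shift v s) i) = \rank (up v (s + i)).
Proof. by rewrite /= rank_castmx. Qed.

Lemma gR_neg (r : seq nat) (x : int) : (x < 0)%R -> gR r x = 0.
Proof. by case: x. Qed.

Lemma valid_R0 (r : seq nat) : valid_tuple r -> 0 < Rsum r 0.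
Proof.
case/and3P=> _ h _; rewrite /Rsum big_nat1 lt0n; by case: r h.
Qed.

Lemma tuple_unique (r1 r2 : seq nat) (s1 s2 : int) :
  valid_tuple r1 -> valid_tuple r2 ->
  (forall i, gR r1 (s1 + i)%R = gR r2 (s2 + i)%R) -> r1 = r2.
Proof.
move=> v1 v2 h.
have h' : forall x, gR r1 x = gR r2 (x + (s2 - s1))%R.
  move=> x; have := h (x - s1)%R; congr (_ = gR r2 _); [congr (gR r1 _)|]; lia.
have hs : (s2 - s1 = 0)%R.
  apply/eqP; rewrite eq_le; apply/andP; split; rewrite leNgt; apply/negP => hlt.
  - have := h' (- (s2 - s1))%R; rewrite addNr (gR_neg r1) ?oppr_lt0 //= => e.
    by have := valid_R0 v2; rewrite -e.
  - have := h' 0%R; rewrite add0r (gR_neg r2) //= => e.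
    by have := valid_R0 v1; rewrite e.
have hR : forall m, Rsum r1 m = Rsum r2 m by move=> m; have := h' m; rewrite hs addr0.
have hn : forall m, nth 0 r1 m = nth 0 r2 m.
  case=> [|m]; first by have := hR 0; rewrite /Rsum !big_nat1.
  by have := hR m.+1; rewrite !RsumS hR => /eqP; rewrite eqn_add2l => /eqP.
have hsz : size r1 = size r2.
  move: v1 v2 => /and3P[p1 _ l1] /and3P[p2 _ l2].
  rewrite -nth_last in l1; rewrite -nth_last in l2.
  apply/eqP; rewrite eqn_leq; apply/andP; split; rewrite leqNgt; apply/negP => hlt.
  - move: l1; rewrite hn nth_default //; by move: hlt p1; case: (size r1).
  - move: l2; rewrite -hn nth_default //; by move: hlt p2; case: (size r2).
by apply: (eq_from_nth (x0 := 0)) => // i _.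
Qed.

End Model.

Section Construction.
Variable k : fieldType.
Variables (n : nat) (upw dnw : int -> 'M[k]_n).
Hypothesis F1u : forall i, upw i *m dnw i = 0.
Hypothesis F1d : forall i, dnw i *m upw i = 0.

Fixpoint upc (j : int) (m : nat) : 'M[k]_n :=
  if m is m'.+1 then upc j m' *m upw (j + m'%:Z) else 1%:M.
Fixpoint dnc (i : int) (m : nat) : 'M[k]_n :=
  if m is m'.+1 then dnw (i + m'%:Z) *m dnc i m' else 1%:M.

Lemma dncS i m : dnc i m.+1 = dnc (i + 1) m *m dnw i.
Proof.
elim: m i => [|m IH] i /=; first by rewrite addr0 mulmx1 mul1mx.
rewrite -/(dnc i m.+1) IH mulmxA; congr (dnw _ *m _ *m _); lia.
Qed.

Definition T (j i : int) : 'M[k]_n :=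
  if j <= i then upc j `|(i - j)%R|%N else dnc i `|(j - i)%R|%N.

Lemma T_upc j m : T j (j + m%:Z) = upc j m.
Proof.
rewrite /T ifT; last by lia.
by have -> : `|(j + m%:Z - j)%R|%N = m by rewrite addrC addKr.
Qed.

Lemma T_dnc i m : T (i + m%:Z) i = dnc i m.
Proof.
case: m => [|m]; first by rewrite addr0 /T lexx subrr.
rewrite /T ifF; last by lia.
by have -> : `|(i + m.+1%:Z - i)%R|%N = m.+1 by rewrite addrC addKr.
Qed.

Lemma le_ex (j i : int) : j <= i -> exists m : nat, i = j + m%:Z.
Proof. move=> h; exists `|(i - j)%R|%N; rewrite gez0_abs ?subr_ge0 //; lia. Qed.

Lemma T_up j i : T j i *m upw i = if j <= i then T j (i + 1) else 0.
Proof.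
case: ifP => h.
- case: (le_ex h) => m ->; rewrite -addrA -PoszD addn1 !T_upc /=.
  by [].
- have : j = i + (`|(j - i - 1)%R|%N.+1)%:Z by rewrite -addn1 PoszD gez0_abs; lia.
  move=> ->; rewrite T_dnc dncS -mulmxA F1d mulmx0 //.
Qed.

Lemma T_dn j i : T j (i + 1) *m dnw i = if j <= i then 0 else T j i.
Proof.
case: ifP => h.
- case: (le_ex h) => m ->; rewrite -addrA -PoszD addn1 T_upc /=.
  by rewrite -mulmxA F1u mulmx0.
- have : j = i + 1 + (`|(j - i - 1)%R|%N)%:Z by rewrite gez0_abs; lia.
  move=> ->; rewrite T_dnc.
  have -> : i + 1 + `|(j - i - 1)%R|%N%:Z = i + (`|(j - i - 1)%R|%N.+1)%:Z.
    by rewrite -addrA -PoszD add1n.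
  by rewrite T_dnc dncS.
Qed.

Lemma T_refl j : T j j = 1%:M.
Proof. by have := T_dnc j 0; rewrite addr0. Qed.


Hypothesis F2 : forall i, \rank (dnw i) = (n - \rank (upw i))%N.
Hypothesis F3 : forall i, \rank (upw i + dnw (i + 1))%MS = (\rank (upw i) + (n - \rank (upw (i + 1))))%N.

Local Notation a i := (\rank (upw i)).

Lemma a_le i : (a i <= n)%N.
Proof. exact: rank_leq_row. Qed.

Lemma a_mono i : (a i <= a (i + 1))%N.
Proof.
have := rank_leq_col (upw i + dnw (i + 1))%MS; rewrite F3.
have := a_le (i + 1); lia.
Qed.

Lemma a_mono' i (m : nat) : (a i <= a (i + m%:Z))%N.
Proof.
elim: m => [|m IH]; first by rewrite addr0.
apply: (leq_trans IH); rewrite -addz_S; exact: a_mono.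
Qed.

Lemma a_monoz i j : i <= j -> (a i <= a j)%N.
Proof. by case/le_ex => m ->; apply: a_mono'. Qed.

Definition C i := ((upw (i - 1) + dnw i)%MS)^C%MS.

Lemma rkC i : \rank (C i) = (a i - a (i - 1))%N.
Proof.
rewrite mxrank_compl; have := F3 (i - 1); rewrite subrK => ->.
have hle : i - 1 <= i by lia.
have := a_le i; have := a_monoz hle.
lia.
Qed.

Variables (t : int) (d : nat).
Hypothesis Ht0 : forall i, i < t -> a i = 0%N.
Hypothesis Ht1 : (0 < a t)%N.
Hypothesis Hd0 : forall i, t + d%:Z <= i -> a i = n.
Hypothesis Hd1 : (0 < d)%N -> (a (t + d%:Z - 1) < n)%N.

Definition r := mkseq (fun l => \rank (C (t + l%:Z))) d.+1.
Definition S l := (\sum_(0 <= m < l) nth 0%N r m)%N.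

Lemma nth_r l : (l < d.+1)%N -> nth 0%N r l = \rank (C (t + l%:Z)).
Proof. by move=> h; rewrite nth_mkseq. Qed.

Lemma S_succ l : S l.+1 = (S l + nth 0%N r l)%N.
Proof. by rewrite /S big_nat_recr. Qed.

Lemma S_mono l l' : (l <= l')%N -> (S l <= S l')%N.
Proof.
move=> h; rewrite /S [X in (_ <= X)%N](@big_cat_nat _ _ _ l) //=; exact: leq_addr.
Qed.

Lemma S_eq l : (l <= d.+1)%N -> S l = a (t + l%:Z - 1).
Proof.
elim: l => [|l IH] h.
  by rewrite /S big_geq // Ht0 //; lia.
rewrite S_succ IH ?(ltnW h) // nth_r // rkC.
have e1 : t + l%:Z - 1 + 1 = t + l%:Z by lia.
have := a_mono (t + l%:Z - 1); rewrite e1.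
have -> : t + l.+1%:Z - 1 = t + l%:Z by lia.
by move/subnKC.
Qed.

Lemma tdeg_r : tdeg r = d.
Proof. by rewrite /tdeg size_mkseq. Qed.

Lemma rtot_r : rtot r = n.
Proof.
rewrite /rtot tdeg_r; change (S d.+1 = n); rewrite S_eq //; apply: Hd0; lia.
Qed.

Lemma Rsum_S m : Rsum r m = S m.+1.
Proof. by []. Qed.

Lemma valid_r : valid_tuple r.
Proof.
apply/and3P; split; first by rewrite size_mkseq.
- have e0 : t + 0%:Z = t by lia.
  rewrite -nth0 nth_r // rkC e0 (Ht0 (i := t - 1)); last by lia.
  by rewrite subn0 -lt0n.
- rewrite -nth_last size_mkseq /= nth_r // rkC Hd0 ?lexx //.
  case: (posnP d) => [d0|dpos].
    rewrite Ht0; last by rewrite d0; lia.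
    by rewrite subn0 -lt0n; apply: (leq_trans Ht1); apply: a_le.
  by have := Hd1 dpos; rewrite -lt0n subn_gt0.
Qed.

Lemma block_lt (l : 'I_d.+1) (b : 'I_(\rank (C (t + l%:Z)))) : (S l + b < S l.+1)%N.
Proof. by rewrite S_succ ltn_add2l nth_r. Qed.

Lemma block_tot (l : 'I_d.+1) (b : 'I_(\rank (C (t + l%:Z)))) : (S l + b < rtot r)%N.
Proof.
apply: (leq_trans (block_lt b)); rewrite /rtot tdeg_r Rsum_S; apply: S_mono; exact: ltn_ord.
Qed.

Lemma up_diag_block (l : 'I_d.+1) (b : 'I_(\rank (C (t + l%:Z)))) (i : int) :
  up_diag r i (S l + b) = (l%:Z <= i).
Proof.
rewrite up_diag_gR ?block_tot //; case: i => [m|m] /=; last by rewrite ltn0.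
rewrite Rsum_S lez_nat; case: (leqP l m) => h.
- apply: (leq_trans (block_lt b)); exact: S_mono.
- apply/negbTE; rewrite -leqNgt; apply: (leq_trans (S_mono h)); exact: leq_addr.
Qed.

Lemma dn_diag_up (rr : seq nat) i x : dn_diag rr i x = ~~ up_diag rr i x.
Proof. case: i => [m|m] //=; case: (leqP (tdeg rr) m) => _ //; by rewrite leqNgt. Qed.

Definition P (l : 'I_d.+1) : 'M[k]_(rtot r, \rank (C (t + l%:Z))) :=
  \matrix_(x, b) ((x : nat) == (S l + b)%N)%:R.

Lemma PtP_entry (m l : 'I_d.+1) b c :
  ((P m)^T *m P l) b c = ((S m + b)%N == (S l + c)%N)%:R.
Proof.
rewrite !mxE (bigD1 (Ordinal (block_tot b))) //= big1 ?addr0.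
  by rewrite !mxE /= eqxx mul1r.
move=> x hx; rewrite !mxE.
have -> : ((x : nat) == (S m + b)%N) = false.
  by apply/negbTE; move: hx; apply: contra => /eqP e; apply/eqP/val_inj.
by rewrite mul0r.
Qed.

Lemma PtP_same (l : 'I_d.+1) : (P l)^T *m P l = 1%:M.
Proof.
apply/matrixP => b c; rewrite PtP_entry !mxE eqn_add2l.
by [].
Qed.

Lemma PtP_diff (m l : 'I_d.+1) : m != l -> (P m)^T *m P l = 0.
Proof.
move=> hml; apply/matrixP => b c; rewrite PtP_entry !mxE.
suff -> : ((S m + b)%N == (S l + c)%N) = false by [].
apply/negbTE; case: (ltngtP m l) => h.
- rewrite neq_ltn; apply/orP; left; apply: (leq_trans (block_lt b)).
  apply: (leq_trans (S_mono h)); exact: leq_addr.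
- rewrite neq_ltn; apply/orP; right; apply: (leq_trans (block_lt c)).
  apply: (leq_trans (S_mono h)); exact: leq_addr.
- by exfalso; move: hml; rewrite (val_inj h) eqxx.
Qed.

Definition Dmx (f : nat -> bool) : 'M[k]_(rtot r) := \matrix_(x, y) ((x == y) && f x)%:R.

Lemma Dmx_P (f : nat -> bool) (l : 'I_d.+1) c :
  (forall b : 'I_(\rank (C (t + l%:Z))), f (S l + b)%N = c) ->
  Dmx f *m P l = if c then P l else 0.
Proof.
move=> hf; apply/matrixP => x b; rewrite !mxE (bigD1 x) //= big1 ?addr0.
  rewrite !mxE eqxx /=.
  case: (boolP ((x : nat) == (S l + b)%N)) => hx.
    by rewrite (eqP hx) hf; case: (c); rewrite ?mxE ?hx ?mul1r ?mul0r.
  by case: (c); rewrite ?mxE ?(negbTE hx) mulr0.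
by move=> y hy; rewrite !mxE eq_sym (negbTE hy) mul0r.
Qed.

Definition Rb (l : 'I_d.+1) := row_base (C (t + l%:Z)).

Definition psi (i : int) : 'M[k]_(rtot r, n) :=
  \sum_(l < d.+1) P l *m Rb l *m T (t + l%:Z) i.

Lemma psi_up i : psi i *m upw i = Dmx (up_diag r (- t + i)) *m psi (i + 1).
Proof.
rewrite /psi mulmx_suml mulmx_sumr; apply: eq_bigr => l _.
rewrite -mulmxA T_up !mulmxA.
rewrite (@Dmx_P _ l (l%:Z <= - t + i)); last by move=> b; rewrite up_diag_block.
have -> : (t + l%:Z <= i) = (l%:Z <= - t + i) by lia.
by case: ifP; rewrite ?mul0mx ?mulmx0.
Qed.

Lemma psi_dn i : psi (i + 1) *m dnw i = Dmx (dn_diag r (- t + i)) *m psi i.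
Proof.
rewrite /psi mulmx_suml mulmx_sumr; apply: eq_bigr => l _.
rewrite -mulmxA T_dn !mulmxA.
rewrite (@Dmx_P _ l (~~ (l%:Z <= - t + i))); last by move=> b; rewrite dn_diag_up up_diag_block.
have -> : (t + l%:Z <= i) = (l%:Z <= - t + i) by lia.
by case: ifP; rewrite ?mul0mx ?mulmx0.
Qed.

Lemma psi_sub (l : 'I_d.+1) i : (Rb l *m T (t + l%:Z) i <= psi i)%MS.
Proof.
have <- : (P l)^T *m psi i = Rb l *m T (t + l%:Z) i.
  rewrite /psi mulmx_sumr (bigD1 l) //= big1 ?addr0.
    by rewrite !mulmxA PtP_same mul1mx.
  by move=> m hm; rewrite !mulmxA PtP_diff ?mul0mx // eq_sym.
exact: submxMl.
Qed.

Lemma full_sum i : (1%:M <= upw (i - 1) + dnw i + C i)%MS.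
Proof. by rewrite sub1mx addsmx_compl_full. Qed.

Lemma C_sub i : (C i <= psi i)%MS.
Proof.
case: (boolP ((t <= i) && (i <= t + d%:Z))) => [/andP[h1 h2]|hn].
  case: (le_ex h1) => m ei; have hm : (m < d.+1)%N by move: h2; rewrite ei; lia.
  subst i; have := psi_sub (Ordinal hm) (t + m%:Z); rewrite T_refl mulmx1 => h.
  by apply: submx_trans h; rewrite /Rb eq_row_base submx_refl.
have : \rank (C i) == 0%N.
  rewrite rkC; case: (ltrP i t) => h.
    by rewrite Ht0.
  have h' : t + d%:Z < i by move: hn h; rewrite negb_and -!ltNge; lia.
  rewrite !Hd0 ?subnn //; lia.
by rewrite mxrank_eq0 => /eqP ->; rewrite sub0mx.
Qed.

Lemma up_sub i : (upw (i - 1) <= psi i)%MS.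
Proof.
move: i; apply: (@int_ind_up t) => [i hi|i IH].
  have : \rank (upw (i - 1)) == 0%N by rewrite Ht0 //; lia.
  by rewrite mxrank_eq0 => /eqP ->; rewrite sub0mx.
rewrite addrK; apply: (@submx_trans _ _ _ _ _ _ (psi i *m upw i)); last first.
  by rewrite psi_up submxMl.
rewrite -[X in (X <= _)%MS]mul1mx; apply: (submx_trans (submxMr (upw i) (full_sum i))).
rewrite addsmxMr addsmx_sub addsmxMr addsmx_sub F1d sub0mx andbT.
by rewrite !submxMr ?IH ?C_sub.
Qed.

Lemma dn_sub i : (dnw i <= psi i)%MS.
Proof.
move: i; apply: (@int_ind_dn (t + d%:Z)) => [i hi|i IH].
  have : \rank (dnw i) == 0%N by rewrite F2 Hd0 // subnn.
  by rewrite mxrank_eq0 => /eqP ->; rewrite sub0mx.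
have hs := full_sum (i + 1); rewrite addrK in hs.
apply: (@submx_trans _ _ _ _ _ _ (psi (i + 1) *m dnw i)); last first.
  by rewrite psi_dn submxMl.
rewrite -[X in (X <= _)%MS]mul1mx; apply: (submx_trans (submxMr (dnw i) hs)).
rewrite addsmxMr addsmx_sub addsmxMr addsmx_sub F1u sub0mx /=.
by rewrite !submxMr ?IH ?C_sub.
Qed.

Lemma psi_full i : row_full (psi i).
Proof.
rewrite -sub1mx; apply: submx_trans (full_sum i) _.
by rewrite !addsmx_sub up_sub dn_sub C_sub.
Qed.

Lemma psi_free i : row_free (psi i).
Proof.
have := psi_full i; rewrite /row_free /row_full => /eqP ->.
by rewrite rtot_r.
Qed.

Lemma construction :
  valid_tuple r /\ rep_iso (shift (urep k r) (- t)) (@ZRep k (fun _ => n) upw dnw).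
Proof.
split; first exact: valid_r.
exists (fun i => psi i); split.
- by move=> i; rewrite psi_free psi_full.
- by move=> i /=; rewrite castmx_id psi_up.
- by move=> i /=; rewrite castmx_id psi_dn.
Qed.

End Construction.

Lemma const_of_step (f : int -> nat) : (forall i, f (i + 1) = f i) -> forall i, f i = f 0.
Proof.
move=> h.
have hp : forall m : nat, f m%:Z = f 0.
  elim=> [//|m IH]; by rewrite -addn1 PoszD h.
have hn : forall m : nat, f (- m%:Z) = f 0.
  elim=> [|m IH]; first by rewrite oppr0.
  rewrite -IH -(h (- m.+1%:Z)); congr f; lia.
by case=> m; [apply: hp|rewrite NegzE; apply: hn].
Qed.

Section Final.
Variable k : fieldType.

Lemma castmx_1_mul m p m' p' (e1 : m = m') (e2 : p = p') (A : 'M[k]_(m, p)) :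
  castmx (erefl m, e1) 1%:M *m castmx (e1, e2) A = A *m castmx (erefl p, e2) 1%:M.
Proof. subst; by rewrite !castmx_id mul1mx mulmx1. Qed.

Lemma castmx_1_iso m m' (e : m = m') :
  row_free (castmx (erefl m, e) (1%:M : 'M[k]_m)) && row_full (castmx (erefl m, e) (1%:M : 'M[k]_m)).
Proof. subst; by rewrite castmx_id /row_free /row_full mxrank1 eqxx. Qed.

Lemma rank_dnpath (u : zrep k) i m : (\rank (dnpath u i m.+1) <= \rank (dn u (i + 0%:Z)))%N.
Proof.
elim: m => [|m IH].
  by rewrite /= rank_castmx mxrankM_maxl.
apply: leq_trans IH; by rewrite [dnpath _ _ m.+2]/= rank_castmx mxrankM_maxr.
Qed.

Variable u : zrep k.
Hypothesis hl : linked_chain u.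
Hypothesis he : exact_rep u.
Hypothesis hnt : nontrivial u.
Hypothesis hfs : finite_support u.

Lemma rk1 i : (\rank (up u i) + \rank (dn u i) = Defs.dim u i)%N.
Proof.
have := eqmx_rank (he i).1; rewrite mxrank_ker; have := rank_leq_row (up u i); lia.
Qed.

Lemma rk2 i : (\rank (up u i) + \rank (dn u i) = Defs.dim u (i + 1))%N.
Proof.
have := eqmx_rank (he i).2; rewrite mxrank_ker; have := rank_leq_row (dn u i); lia.
Qed.

Definition nd := Defs.dim u 0.

Lemma hdim i : Defs.dim u i = nd.
Proof. apply: (const_of_step (f := Defs.dim u)) => j; by rewrite -rk2 rk1. Qed.

Definition upw i : 'M[k]_nd := castmx (hdim i, hdim (i + 1)) (up u i).
Definition dnw i : 'M[k]_nd := castmx (hdim (i + 1), hdim i) (dn u i).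
Definition w := @ZRep k (fun _ => nd) upw dnw.

Lemma iso_uw : rep_iso u w.
Proof.
exists (fun i => castmx (erefl (Defs.dim u i), hdim i) 1%:M); split.
- move=> i; exact: castmx_1_iso.
- move=> i; exact: castmx_1_mul.
- move=> i; exact: castmx_1_mul.
Qed.

Lemma W1u i : upw i *m dnw i = 0.
Proof. case: hl => h1 _ _; exact: castmx_mul0 (h1 i). Qed.
Lemma W1d i : dnw i *m upw i = 0.
Proof. case: hl => _ h2 _; exact: castmx_mul0 (h2 i). Qed.

Lemma rank_upw i : \rank (upw i) = \rank (up u i).
Proof. exact: rank_castmx. Qed.

Lemma W2 i : \rank (dnw i) = (nd - \rank (upw i))%N.
Proof. rewrite rank_upw /dnw rank_castmx; have := rk1 i; have := hdim i; set X := Defs.dim u i; set Y := \rank (up u i); set Z := \rank (dn u i); lia. Qed.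

Lemma W3 i : \rank (upw i + dnw (i + 1))%MS = (\rank (upw i) + (nd - \rank (upw (i + 1))))%N.
Proof.
rewrite /upw /dnw rank_castmx_adds !rank_castmx.
have hcap : \rank (up u i :&: dn u (i + 1))%MS = 0%N.
  case: hl => _ _ h3; apply/eqP; rewrite -leqn0 -(h3 i); apply: mxrankS; apply: capmxS.
  - by case/andP: (he i).2.
  - by case/andP: (he (i + 1)).1.
have := mxrank_sum_cap (up u i) (dn u (i + 1)); rewrite hcap addn0 => ->.
have := rk1 (i + 1); have := hdim (i + 1); lia.
Qed.


Lemma F4 (H : seq int) (hH : forall i, exists2 j, j \in H & comp_surj u j i) :
  (forall i, i < - (\max_(j <- H) `|j|%N)%:Z -> \rank (up u i) = 0%N) /\
  (forall i, (\max_(j <- H) `|j|%N)%:Z <= i -> \rank (up u i) = nd).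
Proof.
set Bn := \max_(j <- H) `|j|%N.
have hb : forall j, j \in H -> - Bn%:Z <= j <= Bn%:Z.
  move=> j hj; have : (`|j|%N <= Bn)%N by apply: (@leq_bigmax_seq _ _ predT).
  by rewrite -lez_nat abszE ler_norml.
split.
- move=> i hi; case: (hH i) => j hj [m [[ei _]|[ej hf]]].
    by exfalso; have := hb j hj; lia.
  case: m ej hf => [|m'] ej hf; first by exfalso; have := hb j hj; lia.
  have h1 := rank_dnpath u i m'.
  move: hf; rewrite /row_full => /eqP hf; rewrite hf in h1.
  have e : i + 0%:Z = i by lia.
  rewrite e in h1.
  have h2 := rank_leq_col (dn u i); have h3 := rk1 i.
  move: h1 h2 h3; set X := Defs.dim u i; set Y := \rank (dn u i); set Z := \rank (up u i).
  lia.
- move=> i hi; case: (hH (i + 1)) => j hj [m [[ei hf]|[ej _]]]; last first.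
    by exfalso; have := hb j hj; lia.
  case: m ei hf => [|m'] ei hf; first by exfalso; have := hb j hj; lia.
  move: hf; rewrite /row_full /= rank_castmx => /eqP hf.
  have h1 := mxrankM_maxr (uppath u j m') (up u (j + m'%:Z)); rewrite hf in h1.
  have h2 := rank_leq_row (up u (j + m'%:Z)).
  have h3 := hdim (j + m'.+1%:Z); have h4 := hdim (j + m'%:Z).
  have e : j + m'%:Z = i by lia.
  move: h1 h2 h3 h4; rewrite e.
  set X := Defs.dim u i; set Y := \rank (up u i); set Z := Defs.dim u (j + m'.+1%:Z); lia.
Qed.

Lemma exist_part : exists r, valid_tuple r /\ equivalent u (urep k r).
Proof.
case: hfs => H hH; have [lo hi] := F4 hH.
set Bn := \max_(j <- H) `|j|%N in lo hi.
have npos : (0 < nd)%N by rewrite lt0n; exact: hnt.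
have exP : exists m : nat, (0 < \rank (upw (- Bn%:Z + m%:Z)))%N.
  exists (2 * Bn)%N; rewrite rank_upw hi //; lia.
case: (ex_minnP exP) => m0 Pm0 minm0.
set t := - Bn%:Z + m0%:Z.
have Ht0 : forall i, i < t -> \rank (upw i) = 0%N.
  move=> i hit; rewrite rank_upw; case: (ltrP i (- Bn%:Z)) => h; first exact: lo.
  have [kk ek] := le_ex h.
  have hk : (kk < m0)%N by move: hit; rewrite ek /t; lia.
  have : ~~ (0 < \rank (upw (- Bn%:Z + kk%:Z)))%N.
    by apply/negP => /minm0; rewrite leqNgt hk.
  by rewrite -ek rank_upw lt0n negbK => /eqP.
have exD : exists m : nat, (nd <= \rank (upw (t + m%:Z)))%N.
  exists (2 * Bn)%N; rewrite rank_upw hi //; lia.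
case: (ex_minnP exD) => d Pd mind.
have Hd0 : forall i, t + d%:Z <= i -> \rank (upw i) = nd.
  move=> i hle; have := a_monoz W3 hle; have := rank_leq_row (upw i).
  move: Pd; set X := \rank (upw _); set Y := \rank (upw i); lia.
have Hd1 : (0 < d)%N -> (\rank (upw (t + d%:Z - 1)) < nd)%N.
  move=> dpos; have e : t + d%:Z - 1 = t + (d.-1)%:Z by lia.
  rewrite e ltnNge; apply/negP => /mind; lia.
have [v iso] := construction W1u W1d W2 W3 Ht0 Pm0 Hd0 Hd1.
eexists; split; first exact: v.
exists (- t); apply: rep_iso_trans iso_uw (rep_iso_sym iso).
Qed.

End Final.

Lemma uniq_part (k : fieldType) (u : zrep k) r1 r2 :
  valid_tuple r1 -> valid_tuple r2 -> equivalent u (urep k r1) -> equivalent u (urep k r2) ->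
  r1 = r2.
Proof.
move=> v1 v2 [s1 i1] [s2 i2]; apply: (tuple_unique (s1 := s1) (s2 := s2)) => // i.
rewrite -(@rank_up_urep k) -rank_up_shift -(rep_iso_rank i1).
by rewrite (rep_iso_rank i2) rank_up_shift rank_up_urep.
Qed.

Theorem proposition3p2 (k : fieldType) (u : zrep k) :
  linked_chain u -> exact_rep u -> nontrivial u -> finite_support u ->
  exists! r : seq nat, valid_tuple r /\ equivalent u (urep k r).
Proof.
move=> hl he hnt hfs; case: (exist_part hl he hnt hfs) => r [v e].
exists r; split => // r' [v' e']; exact: uniq_part v v' e e'.
Qed.
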